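(* Let $H$ be a monoid. Then: (i) if $\mathcal{P}_{\mathrm{fin},1}(H)$ is HmF, then every element of $H$ has order $\le 3$; (ii) if $\mathcal{P}_{\mathrm{fin},1}(H)$ is UmF, then every element of $H$ has order $\le 2$. In either case, $H$ is periodic (every element has finite order) and hence Dedekind-finite.
   Context: The order of an element $x$ of a monoid is the cardinality of the submonoid it generates. A monoid $M$ is Dedekind-finite if $xy=1_M$ implies $yx=1_M$. $\mathcal{P}_{\mathrm{fin},1}(H)$ denotes the set of non-empty finite subsets of $H$ containing $1_H$, a monoid under $XY=\{xy:x\in X,y\in Y\}$. In a monoid $M$: $x\mid_M y$ iff $y\in MxM$; $x,y$ are associated if each divides the other; proper divisor means divides but not associated. A unit-divisor divides $1_M$; otherwise it is a non-unit-divisor. An irreducible is a non-unit-divisor $a$ with $a\neq xy$ for all non-unit-divisors $x,y$ properly dividing $a$. A factorization of $x$ is a finite word over the irreducibles with product $x$; its length is its number of letters. For words $\mathfrak a,\mathfrak b$, $\mathfrak a\sqsubseteq\mathfrak b$ means $\mathfrak a$ is, up to associatedness of letters, a subword (subsequence) of some permutation of $\mathfrak b$; equivalence means $\sqsubseteq$ both ways. A factorization $\mathfrak a$ of $x$ is minimal if no factorization $\mathfrak b$ of $x$ satisfies $\mathfrak b\sqsubseteq\mathfrak a\not\sqsubseteq\mathfrak b$. $M$ is HmF if every non-unit-divisor has a factorization and all minimal factorizations of any element have the same length; UmF if every non-unit-divisor has a factorization and any two minimal factorizations of an element are equivalent. *)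

(* Defs.v *)
From Stdlib Require Import List Permutation Arith.
Import ListNotations.
Set Implicit Arguments.

Record monoid := Monoid {
  carrier :> Type;
  mop : carrier -> carrier -> carrier;
  mone : carrier;
  mopA : forall x y z, mop x (mop y z) = mop (mop x y) z;
  mop1m : forall x, mop mone x = x;
  mopm1 : forall x, mop x mone = x }.

Arguments mop {m}.
Arguments mone {m}.

Section Generic.
Variables (M : Type) (mul : M -> M -> M) (one : M).

Definition mdivides (x y : M) : Prop := exists a b, y = mul (mul a x) b.
Definition massociated (x y : M) : Prop := mdivides x y /\ mdivides y x.
Definition mproper_divisor (x y : M) : Prop := mdivides x y /\ ~ massociated x y.
Definition unit_divisor (x : M) : Prop := mdivides x one.

Definition irreducible (a : M) : Prop :=
  ~ unit_divisor a /\
  forall x y, ~ unit_divisor x -> ~ unit_divisor y ->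
    mproper_divisor x a -> mproper_divisor y a -> a <> mul x y.

Definition word_prod (w : list M) : M := fold_right mul one w.

Definition factorization (x : M) (w : list M) : Prop :=
  Forall irreducible w /\ word_prod w = x.

Inductive subword_rel (R : M -> M -> Prop) : list M -> list M -> Prop :=
| sw_nil : subword_rel R [] []
| sw_skip : forall a b y, subword_rel R a b -> subword_rel R a (y :: b)
| sw_take : forall a b x y, R x y -> subword_rel R a b -> subword_rel R (x :: a) (y :: b).

Definition word_le (a b : list M) : Prop :=
  exists b', Permutation b b' /\ subword_rel massociated a b'.

Definition word_equiv (a b : list M) : Prop := word_le a b /\ word_le b a.

Definition minimal_factorization (x : M) (a : list M) : Prop :=
  factorization x a /\
  ~ (exists b, factorization x b /\ word_le b a /\ ~ word_le a b).

Definition HmF : Prop :=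
  (forall x, ~ unit_divisor x -> exists w, factorization x w) /\
  (forall x a b, minimal_factorization x a -> minimal_factorization x b ->
     length a = length b).

Definition UmF : Prop :=
  (forall x, ~ unit_divisor x -> exists w, factorization x w) /\
  (forall x a b, minimal_factorization x a -> minimal_factorization x b ->
     word_equiv a b).

End Generic.

Definition is_finite {T : Type} (X : T -> Prop) : Prop :=
  exists l : list T, forall x, X x -> In x l.

Definition card_le {T : Type} (X : T -> Prop) (n : nat) : Prop :=
  exists l : list T, length l <= n /\ forall x, X x -> In x l.

Section MonoidDefs.
Variable H : monoid.

Fixpoint mpow (x : H) (n : nat) : H :=
  match n with O => mone | S k => mop x (mpow x k) end.

Definition gen_submonoid (x : H) : H -> Prop := fun y => exists n, y = mpow x n.

Definition order_le (x : H) (n : nat) : Prop := card_le (gen_submonoid x) n.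

Definition has_finite_order (x : H) : Prop := is_finite (gen_submonoid x).
Definition periodic : Prop := forall x : H, has_finite_order x.

Definition dedekind_finite : Prop :=
  forall x y : H, mop x y = mone -> mop y x = mone.

Definition setmul (X Y : H -> Prop) : H -> Prop :=
  fun z => exists x y, X x /\ Y y /\ z = mop x y.

Definition Pfin1 : Type := { X : H -> Prop | is_finite X /\ X mone }.

Lemma setmul_ok (X Y : H -> Prop) :
  is_finite X /\ X mone -> is_finite Y /\ Y mone ->
  is_finite (setmul X Y) /\ setmul X Y mone.
Proof.
  intros [[lx Hx] X1] [[ly Hy] Y1]; split.
  - exists (flat_map (fun x => map (mop x) ly) lx).
    intros z (x & y & Xx & Yy & ->).
    apply in_flat_map; exists x; split; [auto|].
    apply in_map; auto.
  - exists mone, mone; repeat split; auto. now rewrite mop1m.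
Qed.

Definition Pmul (A B : Pfin1) : Pfin1 :=
  exist _ (setmul (proj1_sig A) (proj1_sig B))
    (setmul_ok (proj2_sig A) (proj2_sig B)).

Lemma Pone_ok : is_finite (fun z : H => z = mone) /\ (@mone H) = mone.
Proof. split; [exists [mone]; intros z ->; left; auto | auto]. Qed.

Definition Pone : Pfin1 := exist _ (fun z : H => z = mone) Pone_ok.

End MonoidDefs.

Arguments Pmul {H}.
Arguments Pone {H}.
Arguments order_le {H}.
Arguments mpow {H}.
Arguments gen_submonoid {H}.
Arguments has_finite_order {H}.

(* Main.v *)
Require Import Defs.
From Stdlib Require Import List Permutation Arith Lia Classical FunctionalExtensionality PropExtensionality ProofIrrelevance.
Import ListNotations.
Set Implicit Arguments.

Section S.
Variable H : monoid.
Notation T := (Pfin1 H).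
Notation PM := (@Pmul H).
Notation P1 := (@Pone H).

Lemma Pext (A B : T) : (forall z, proj1_sig A z <-> proj1_sig B z) -> A = B.
Proof.
  destruct A as [A pA], B as [B pB]; simpl; intro h.
  assert (A = B) by (extensionality z; apply propositional_extensionality; auto).
  subst. f_equal; apply proof_irrelevance.
Qed.

Lemma one_in (A : T) : proj1_sig A mone.
Proof. exact (proj2 (proj2_sig A)). Qed.

Lemma div_sub (A B : T) : mdivides PM A B -> forall z, proj1_sig A z -> proj1_sig B z.
Proof.
  intros [a [b ->]] z Hz. simpl. unfold setmul.
  exists (mop mone z), mone. split; [|split].
  - exists mone, z. repeat split; auto using one_in.
  - apply one_in.
  - rewrite mopm1, mop1m. reflexivity.
Qed.

Lemma div_refl (A : T) : mdivides PM A A.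
Proof.
  exists P1, P1. apply Pext. intro z. simpl. unfold setmul. split.
  - intros Hz. exists z, mone. split; [|split; [reflexivity|]].
    + exists mone, z. repeat split; auto. now rewrite mop1m.
    + now rewrite mopm1.
  - intros (u & v & (u1 & u2 & e1 & Hu2 & ->) & e2 & ->). subst.
    now rewrite mopm1, mop1m.
Qed.

Lemma assoc_eq (A B : T) : massociated PM A B -> A = B.
Proof.
  intros [h1 h2]. apply Pext; intro z; split; [apply (div_sub h1)|apply (div_sub h2)].
Qed.

Lemma assoc_refl (A : T) : massociated PM A A.
Proof. split; apply div_refl. Qed.

Lemma unit_div_iff (A : T) : unit_divisor PM P1 A <-> forall z, proj1_sig A z -> z = mone.
Proof.
  split.
  - intros h z Hz. exact (div_sub h _ Hz).
  - intros h. assert (A = P1) as ->.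
    { apply Pext; intro z; split; simpl; auto. intros ->; apply one_in. }
    apply div_refl.
Qed.

Definition pairS (a : H) : H -> Prop := fun z => z = mone \/ z = a.
Lemma pair_ok a : is_finite (pairS a) /\ pairS a mone.
Proof. split. exists [mone; a]. intros z [->| ->]; simpl; auto. left; auto. Qed.
Definition Ppair a : T := exist _ (pairS a) (pair_ok a).

Lemma pair_irred (a : H) : a <> mone -> irreducible PM P1 (Ppair a).
Proof.
  intros na. split.
  - rewrite unit_div_iff. intro h. apply na, h. simpl. right; auto.
  - intros X Y nX _ [dX aX] _ _.
    apply aX. assert (X = Ppair a) as ->; [|apply assoc_refl].
    apply Pext. intro z. split; [apply (div_sub dX)|].
    simpl. intros [->| ->]; [apply one_in|].
    apply NNPP; intro nXa. apply nX. rewrite unit_div_iff.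
    intros w Hw. destruct (div_sub dX _ Hw) as [|]; subst; tauto.
Qed.

Lemma sw_len R (b a : list T) : subword_rel R b a -> length b <= length a.
Proof. induction 1; simpl; lia. Qed.

Lemma sw_in R (b a : list T) : subword_rel R b a -> forall c, In c b -> exists c', In c' a /\ R c c'.
Proof.
  induction 1; simpl; intros c Hc; try tauto.
  - destruct (IHsubword_rel c Hc) as (c' & ? & ?); eauto.
  - destruct Hc as [<-|Hc]; eauto.
    destruct (IHsubword_rel c Hc) as (c' & ? & ?); eauto.
Qed.

Lemma sw_eqlen (b a : list T) : subword_rel (massociated PM) b a -> length b = length a -> b = a.
Proof.
  induction 1; simpl; intros e; auto.
  - apply sw_len in H0. lia.
  - f_equal; auto using assoc_eq.
Qed.

Lemma sw_refl (a : list T) : subword_rel (massociated PM) a a.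
Proof. induction a; [constructor|apply sw_take]; auto using assoc_refl. Qed.

Lemma wle_len (b a : list T) : word_le PM b a -> length b <= length a.
Proof.
  intros (a' & hp & hs). apply sw_len in hs. apply Permutation_length in hp. lia.
Qed.

Lemma wle_in (b a : list T) : word_le PM b a -> forall c, In c b -> In c a.
Proof.
  intros (a' & hp & hs) c hc. destruct (sw_in hs _ hc) as (c' & i & e).
  apply assoc_eq in e; subst. apply Permutation_sym in hp. eapply Permutation_in; eauto.
Qed.

Lemma wle_eqlen (b a : list T) : word_le PM b a -> length b = length a -> word_le PM a b.
Proof.
  intros (a' & hp & hs) e. apply sw_eqlen in hs.
  - subst. exists a. split; [apply Permutation_sym; auto| apply sw_refl].
  - apply Permutation_length in hp. lia.
Qed.

Lemma min_fact (X : T) (a : list T) : factorization PM P1 X a ->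
  (forall b, word_prod PM P1 b = X -> length b < length a -> (forall c, In c b -> In c a) -> False) ->
  minimal_factorization PM P1 X a.
Proof.
  intros hf hb. split; auto. intros (b & [_ e] & hle & hn).
  pose proof (wle_len hle). destruct (Nat.eq_dec (length b) (length a)).
  - apply hn, wle_eqlen; auto.
  - eapply hb; eauto. lia. apply wle_in; auto.
Qed.


Ltac mdestruct := repeat match goal with
 | h : exists _, _ |- _ => destruct h
 | h : _ /\ _ |- _ => destruct h
 | h : _ \/ _ |- _ => destruct h
 | h : ?a = _ |- _ => is_var a; subst a
 end.

Ltac msolve :=
  lazymatch goal with
  | |- exists _, _ => eexists; msolve
  | |- _ /\ _ => split; [msolve | msolve]
  | |- _ \/ _ => (left; msolve) + (right; msolve)
  | |- _ => (reflexivity + (rewrite ?mop1m, ?mopm1; reflexivity))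
  end.

Ltac mfin := cbn [proj1_sig Pmul Ppair Pone word_prod fold_right] in *; unfold setmul, pairS in *.

Section Conc.
Variable x : H.
Let x2 := mop x x.
Let x3 := mop x (mop x x).
Let P := Ppair x.
Let Q := Ppair (mop x x).

Lemma memPPP z : proj1_sig (word_prod PM P1 [P;P;P]) z <-> z = mone \/ z = x \/ z = mop x x \/ z = mop x (mop x x).
Proof.
  unfold P; mfin. split; intro h.
  - mdestruct; rewrite ?mop1m, ?mopm1; msolve.
  - mdestruct; msolve.
Qed.
Lemma memPQ z : proj1_sig (word_prod PM P1 [P;Q]) z <-> z = mone \/ z = x \/ z = mop x x \/ z = mop x (mop x x).
Proof.
  unfold P, Q; mfin. split; intro h.
  - mdestruct; rewrite ?mop1m, ?mopm1; msolve.
  - mdestruct; msolve.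
Qed.
Lemma memPP z : proj1_sig (word_prod PM P1 [P;P]) z <-> z = mone \/ z = x \/ z = mop x x.
Proof.
  unfold P; mfin. split; intro h.
  - mdestruct; rewrite ?mop1m, ?mopm1; msolve.
  - mdestruct; msolve.
Qed.
Lemma memP z : proj1_sig (word_prod PM P1 [P]) z <-> z = mone \/ z = x.
Proof.
  unfold P; mfin. split; intro h.
  - mdestruct; rewrite ?mop1m, ?mopm1; msolve.
  - mdestruct; msolve.
Qed.
Lemma memQ z : proj1_sig (word_prod PM P1 [Q]) z <-> z = mone \/ z = mop x x.
Proof.
  unfold Q; mfin. split; intro h.
  - mdestruct; rewrite ?mop1m, ?mopm1; msolve.
  - mdestruct; msolve.
Qed.
Lemma mem0 z : proj1_sig (word_prod PM P1 []) z <-> z = mone.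
Proof. mfin. tauto. Qed.

Lemma hmf_contra : HmF PM P1 -> x <> mone -> mop x x <> mone -> mop x x <> x ->
  mop x (mop x x) <> mone -> mop x (mop x x) <> x -> mop x (mop x x) <> mop x x -> False.
Proof.
  intros [_ hm] n1 n2 n3 n4 n5 n6.
  assert (iP : irreducible PM P1 P) by (apply pair_irred; auto).
  assert (iQ : irreducible PM P1 Q) by (apply pair_irred; auto).
  assert (eX : word_prod PM P1 [P;Q] = word_prod PM P1 [P;P;P]).
  { apply Pext; intro z; rewrite memPQ, memPPP; tauto. }
  assert (inX : proj1_sig (word_prod PM P1 [P;P;P]) (mop x (mop x x))) by (rewrite memPPP; tauto).
  specialize (hm (word_prod PM P1 [P;P;P]) [P;P;P] [P;Q]).
  cut (3 = 2); [discriminate|]. apply hm.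
  - apply min_fact. split; [repeat (apply Forall_cons; [assumption|]); apply Forall_nil | reflexivity].
    intros b eb lb ib. rewrite <- eb in inX.
    destruct b as [|c [|d [|e b]]]; simpl in lb; try lia.
    + rewrite mem0 in inX; auto.
    + assert (c = P) as -> by (destruct (ib c) as [|[|[|[]]]]; simpl; auto).
      rewrite memP in inX; tauto.
    + assert (c = P) as -> by (destruct (ib c) as [|[|[|[]]]]; simpl; auto).
      assert (d = P) as -> by (destruct (ib d) as [|[|[|[]]]]; simpl; auto).
      rewrite memPP in inX; tauto.
  - rewrite <- eX. apply min_fact. split; [repeat (apply Forall_cons; [assumption|]); apply Forall_nil | reflexivity].
    rewrite eX.
    intros b eb lb ib. rewrite <- eb in inX.
    destruct b as [|c [|d b]]; simpl in lb; try lia.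
    + rewrite mem0 in inX; auto.
    + destruct (ib c) as [<-|[<-|[]]]; simpl; auto.
      * rewrite memP in inX; tauto.
      * rewrite memQ in inX; tauto.
Qed.

Lemma umf_contra : UmF PM P1 -> x <> mone -> mop x x <> mone -> mop x x <> x ->
  (mop x (mop x x) = mone \/ mop x (mop x x) = x \/ mop x (mop x x) = mop x x) -> False.
Proof.
  intros [_ hm] n1 n2 n3 h3.
  assert (iP : irreducible PM P1 P) by (apply pair_irred; auto).
  assert (iQ : irreducible PM P1 Q) by (apply pair_irred; auto).
  assert (eX : word_prod PM P1 [P;Q] = word_prod PM P1 [P;P]).
  { apply Pext; intro z; rewrite memPQ, memPP. intuition; subst; rewrite ?H0, ?H1, ?H2; tauto. }
  assert (inX1 : proj1_sig (word_prod PM P1 [P;P]) x) by (rewrite memPP; tauto).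
  assert (inX2 : proj1_sig (word_prod PM P1 [P;P]) (mop x x)) by (rewrite memPP; tauto).
  specialize (hm (word_prod PM P1 [P;P]) [P;P] [P;Q]).
  destruct hm as [_ hle].
  - apply min_fact. split; [repeat (apply Forall_cons; [assumption|]); apply Forall_nil | reflexivity].
    intros b eb lb ib. rewrite <- eb in inX1, inX2.
    destruct b as [|c [|d b]]; simpl in lb; try lia.
    + rewrite mem0 in inX1; auto.
    + assert (c = P) as -> by (destruct (ib c) as [|[|[]]]; simpl; auto).
      rewrite memP in inX2; tauto.
  - rewrite <- eX. apply min_fact. split; [repeat (apply Forall_cons; [assumption|]); apply Forall_nil | reflexivity].
    rewrite eX.
    intros b eb lb ib. rewrite <- eb in inX1, inX2.
    destruct b as [|c [|d b]]; simpl in lb; try lia.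
    + rewrite mem0 in inX1; auto.
    + destruct (ib c) as [<-|[<-|[]]]; simpl; auto.
      * rewrite memP in inX2; tauto.
      * rewrite memQ in inX1; intuition congruence.
  - assert (hq : In Q [P;P]) by (apply (wle_in hle); simpl; auto).
    assert (P = Q) as eq by (destruct hq as [|[|[]]]; auto).
    assert (hx : proj1_sig Q x) by (rewrite <- eq; simpl; right; auto).
    destruct hx; auto.
Qed.
End Conc.

Lemma mpow_add (x : H) a b : mpow x (a + b) = mop (mpow x a) (mpow x b).
Proof. induction a; simpl. now rewrite mop1m. now rewrite IHa, mopA. Qed.

Lemma periodic_pow (x : H) i j : i < j -> mpow x i = mpow x j ->
  forall m, exists k, k < j /\ mpow x m = mpow x k.
Proof.
  intros lij e m. induction m as [m IH] using (well_founded_induction lt_wf).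
  destruct (Nat.lt_ge_cases m j) as [l|l]; [eauto|].
  replace m with ((m - j) + j) by lia. rewrite mpow_add, <- e, <- mpow_add.
  apply IH. lia.
Qed.

Lemma col_order (x : H) n : (exists i j, i < j <= n /\ mpow x i = mpow x j) -> order_le x n.
Proof.
  intros (i & j & [l1 l2] & e). exists (map (mpow x) (seq 0 j)). split.
  - rewrite length_map, length_seq; lia.
  - intros z [m ->]. destruct (periodic_pow x l1 e m) as (k & lk & ->).
    apply in_map, in_seq. lia.
Qed.

Lemma order_col (x : H) n : order_le x n -> exists i j, i < j <= n /\ mpow x i = mpow x j.
Proof.
  intros (l & ll & hl). apply NNPP; intro N.
  assert (nd : NoDup (map (mpow x) (seq 0 (S n)))).
  { apply NoDup_map_NoDup_ForallPairs; [|apply seq_NoDup].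
    intros a b ia ib e. apply in_seq in ia, ib.
    destruct (Nat.lt_trichotomy a b) as [h|[h|h]]; auto; exfalso; apply N.
    - exists a, b; split; [lia|auto].
    - exists b, a; split; [lia|auto]. }
  apply NoDup_incl_length with (l' := l) in nd.
  - rewrite length_map, length_seq in nd. lia.
  - intros z hz. apply in_map_iff in hz. destruct hz as (m & <- & _). apply hl. exists m; auto.
Qed.

Lemma hmf_ord (x : H) : HmF PM P1 -> order_le x 3.
Proof.
  intros hh. apply col_order. apply NNPP; intro N.
  apply (@hmf_contra x hh); intro e; apply N.
  - exists 0, 1; split; [lia|]. simpl; rewrite mopm1; auto.
  - exists 0, 2; split; [lia|]. simpl; rewrite mopm1; auto.
  - exists 1, 2; split; [lia|]. simpl; rewrite !mopm1; auto.
  - exists 0, 3; split; [lia|]. simpl; rewrite mopm1; auto.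
  - exists 1, 3; split; [lia|]. simpl; rewrite !mopm1; auto.
  - exists 2, 3; split; [lia|]. simpl; rewrite !mopm1; auto.
Qed.

Lemma umf_hmf : UmF PM P1 -> HmF PM P1.
Proof.
  intros [h1 h2]. split; auto. intros X a b ha hb.
  destruct (h2 X a b ha hb) as [e1 e2]. apply wle_len in e1, e2. lia.
Qed.

Lemma umf_ord (x : H) : UmF PM P1 -> order_le x 2.
Proof.
  intros hu. apply col_order. apply NNPP; intro N.
  assert (n1 : x <> mone).
  { intro e; apply N. exists 0, 1; split; [lia|]. simpl; rewrite mopm1; auto. }
  assert (n2 : mop x x <> mone).
  { intro e; apply N. exists 0, 2; split; [lia|]. simpl; rewrite mopm1; auto. }
  assert (n3 : mop x x <> x).
  { intro e; apply N. exists 1, 2; split; [lia|]. simpl; rewrite !mopm1; auto. }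
  destruct (classic (mop x (mop x x) = mone \/ mop x (mop x x) = x \/ mop x (mop x x) = mop x x)) as [c|c].
  - exact (@umf_contra x hu n1 n2 n3 c).
  - apply (@hmf_contra x (umf_hmf hu)); auto.
Qed.

Lemma dedekind_of (x y : H) n : order_le x n -> mop x y = mone -> mop y x = mone.
Proof.
  intros ho exy. destruct (order_col ho) as (i & j & [l1 _] & e).
  assert (hn : forall m, mop (mpow x m) (mpow y m) = mone).
  { induction m. simpl. now rewrite mop1m.
    replace (mpow x (S m)) with (mpow x (m + 1)) by (rewrite Nat.add_comm; reflexivity).
    rewrite mpow_add; simpl. rewrite mopm1, <- mopA, (mopA _ x y), exy, mop1m. auto. }
  set (d := j - i).
  assert (ed : mpow x d = mone).
  { assert (e2 : mop (mpow x d) (mpow x i) = mpow x i).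
    { rewrite <- mpow_add. replace (d + i) with j by lia. auto. }
    rewrite <- (mopm1 _ (mpow x d)), <- (hn i), mopA, e2. reflexivity. }
  assert (hd : d = j - i) by reflexivity. clearbody d. destruct d as [|d]; [lia|]. simpl in ed.
  assert (ed' : mop (mpow x d) x = mone).
  { rewrite <- ed. replace (mop (mpow x d) x) with (mpow x (d + 1)) by (rewrite mpow_add; simpl; now rewrite mopm1).
    rewrite Nat.add_comm. reflexivity. }
  assert (ey : y = mpow x d).
  { rewrite <- (mop1m _ y), <- ed', <- mopA, exy, mopm1. auto. }
  rewrite ey. auto.
Qed.

End S.

Theorem lemma3p4 (H : monoid) :
  (HmF (@Pmul H) Pone -> forall x : H, order_le x 3) /\
  (UmF (@Pmul H) Pone -> forall x : H, order_le x 2) /\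
  (HmF (@Pmul H) Pone \/ UmF (@Pmul H) Pone -> periodic H /\ dedekind_finite H).
Proof.
  split; [|split].
  - intros hh x. apply hmf_ord; auto.
  - intros hu x. apply umf_ord; auto.
  - intros hh. assert (hh' : HmF (@Pmul H) Pone) by (destruct hh; auto using umf_hmf).
    split.
    + intros x. destruct (hmf_ord x hh') as (l & _ & hl). exists l; auto.
    + intros x y. apply dedekind_of with (n := 3). apply hmf_ord; auto.
Qed.
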